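(* Let $p$ be an odd prime and $q$ an even power of $p$. Let $\chi$ be a non-trivial multiplicative character of $\mathbb{F}_q$ and $A \subseteq \mathbb{F}_q$ with $|A|=\sqrt{q}$. For $c\in\mathbb{F}_q^*$ let $S(q,A;c)=\sum_{a \in A} e_p\big(\operatorname{Tr}(ac)\big)$. Then $\chi(a-b)=1$ for all $a,b \in A$ with $a \neq b$ if and only if for every $c \in \mathbb{F}_q^*$ the complex numbers $\chi(c)|S(q,A;c)|^2$ and $G(\chi)$ share the same argument.
   Context: $\operatorname{Tr}$ is the absolute trace $\mathbb{F}_q \to \mathbb{F}_p$ and $e_p(x)=e^{2\pi i x/p}$ for $x\in\mathbb{F}_p$. Multiplicative characters are extended by $\chi(0)=0$. $G(\chi)=\sum_{c \in \mathbb{F}_q}\chi(c)e_p(\operatorname{Tr}(c))$. The number $0$ is regarded as sharing the argument of any complex number. *)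

(* Defs.v *)
From mathcomp Require Import all_boot all_order all_algebra all_field.
From mathcomp Require Import reals trigo.
From mathcomp Require Export complex.
Set Implicit Arguments. Unset Strict Implicit. Unset Printing Implicit Defensive.
Import GRing.Theory Num.Theory.
Local Open Scope ring_scope.

Section Defs.
Variable R : realType.
Variables (F : finFieldType) (p : nat).

(* absolute trace F_q -> F_p, q = p^n, n = logn p q; value in the prime
   subfield of F *)
Definition abs_trace (x : F) : F :=
  \sum_(i < logn p #|F|) x ^+ (p ^ i).

(* the additive character e_p(Tr x) = exp(2 pi i m / p), where m in
   {0,...,p-1} is the integer whose image in F is Tr x *)
Definition trace_int (x : F) : nat :=
  if [pick m : 'I_p | (m%:R : F) == abs_trace x] is Some m then val m else 0%N.

Definition ep_tr (x : F) : R[i] :=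
  Complex (cos (2 * pi * (trace_int x)%:R / p%:R))
          (sin (2 * pi * (trace_int x)%:R / p%:R)).

Definition mult_char (chi : F -> R[i]) : Prop :=
  [/\ chi 0 = 0, chi 1 = 1 & (forall x y, x != 0 -> y != 0 -> chi (x * y) = chi x * chi y)].

Definition nontrivial_char (chi : F -> R[i]) : Prop :=
  exists x : F, x != 0 /\ chi x != 1.

Definition gauss_sum (chi : F -> R[i]) : R[i] :=
  \sum_(c : F) chi c * ep_tr c.

Definition S_sum (A : {set F}) (c : F) : R[i] :=
  \sum_(a in A) ep_tr (a * c).
End Defs.

(* two complex numbers share the same argument; 0 shares the argument of
   every complex number *)
Definition same_arg (R : realType) (z w : R[i]) : Prop :=
  z = 0 \/ w = 0 \/ exists r : R, 0 < r /\ z = r%:C%C * w.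

(* Main.v *)
Require Import Defs.
From mathcomp Require Import all_boot all_order all_algebra all_field.
From mathcomp Require Import reals trigo complex.
From mathcomp Require Import ring lra.
Import GRing.Theory Num.Theory.
Local Open Scope ring_scope.


Section Abstract.
Variables (R : realType) (F : finFieldType).
Local Notation C := R[i].
Variable psi : F -> C.
Hypotheses (psiD : forall x y, psi (x + y) = psi x * psi y) (psi0 : psi 0 = 1)
  (psiN : forall x, (psi x)^* = psi (-x)).
Variable c0 : F.
Hypothesis psic0 : psi c0 != 1.

Lemma sum_psi1 : \sum_c psi c = 0.
Proof.
have: \sum_c psi c = psi c0 * \sum_c psi c.
  rewrite mulr_sumr (reindex_inj (addrI c0)) /=.
  by apply: eq_bigr => c _; rewrite psiD.
move/eqP; rewrite -subr_eq0 -{1}[\sum_c psi c]mul1r -mulrBl mulf_eq0 subr_eq0 eq_sym.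
by rewrite (negbTE psic0) /= => /eqP.
Qed.

Lemma sum_psi x : \sum_c psi (x * c) = if x == 0 then #|F|%:R else 0.
Proof.
case: eqP => [->|/eqP hx].
  under eq_bigr do rewrite mul0r psi0.
  by rewrite sumr_const.
by have := sum_psi1; rewrite (reindex_inj (mulfI hx)).
Qed.


Variable chi : F -> C.
Hypotheses (chi0 : chi 0 = 0) (chi1 : chi 1 = 1)
  (chiM0 : forall x y, x != 0 -> y != 0 -> chi (x * y) = chi x * chi y).
Variable x1 : F.
Hypotheses (x1n0 : x1 != 0) (chix1 : chi x1 != 1).

Lemma chiM x y : chi (x * y) = chi x * chi y.
Proof.
have [->|hx] := eqVneq x 0; first by rewrite mul0r chi0 mul0r.
have [->|hy] := eqVneq y 0; first by rewrite mulr0 chi0 mulr0.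
exact: chiM0.
Qed.

Lemma chiX x n : chi (x ^+ n) = chi x ^+ n.
Proof. by elim: n => [|n IH]; rewrite ?expr0 ?chi1 // !exprS chiM IH. Qed.

Lemma norm_chi x : x != 0 -> `|chi x| = 1.
Proof.
move=> hx.
have cardF : (1 < #|F|)%N by rewrite (cardD1 0) (cardD1 1) !inE oner_eq0.
have h1 : x ^+ (#|F|.-1) = 1.
  apply: (mulIf hx); rewrite mul1r -exprSr prednK ?expf_card //.
  by apply: ltn_trans cardF.
have : `|chi x| ^+ (#|F|.-1) = 1 by rewrite -normrX -chiX h1 chi1 normr1.
move/eqP; rewrite pexpr_eq1 ?normr_ge0 //; first by move/eqP.
by rewrite -ltnS prednK //; apply: ltn_trans cardF.
Qed.

Lemma conj_chi x : (chi x)^* = chi (x^-1).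
Proof.
have [->|hx] := eqVneq x 0; first by rewrite invr0 chi0 conjC0.
have h : chi x * chi x^-1 = 1 by rewrite -chiM mulfV // chi1.
by rewrite -[_^*]mulr1 -h mulrA (mulrC _ (chi x)) -normCK norm_chi // expr1n mul1r.
Qed.

Lemma sum_chi : \sum_c chi c = 0.
Proof.
have: \sum_c chi c = chi x1 * \sum_c chi c.
  rewrite mulr_sumr (reindex_inj (mulfI x1n0)) /=.
  by apply: eq_bigr => c _; rewrite chiM.
move/eqP; rewrite -subr_eq0 -{1}[\sum_c chi c]mul1r -mulrBl mulf_eq0 subr_eq0 eq_sym.
by rewrite (negbTE chix1) /= => /eqP.
Qed.

Definition G := \sum_c chi c * psi c.

Lemma G1 x : \sum_c chi c * psi (x * c) = (chi x)^* * G.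
Proof.
have [->|hx] := eqVneq x 0.
  under eq_bigr do rewrite mul0r psi0 mulr1.
  by rewrite sum_chi chi0 conjC0 mul0r.
have hxi : x^-1 != 0 by rewrite invr_eq0.
rewrite (reindex_inj (mulfI hxi)) /= /G mulr_sumr conj_chi.
by apply: eq_bigr => c _; rewrite mulrA mulfV // mul1r chiM mulrA.
Qed.

Lemma G2 : G * G^* = #|F|%:R.
Proof.
have -> : G^* = \sum_x (chi x)^* * psi (- x).
  by rewrite /G rmorph_sum; apply: eq_bigr => x _; rewrite rmorphM /= psiN.
have eG2 : forall x c : F, x * c + - x = (c - 1) * x.
  by move=> x c; rewrite mulrBl mul1r mulrC.
rewrite mulr_sumr.
under eq_bigr do rewrite mulrA (mulrC G) -G1 mulr_suml.
rewrite exchange_big /=.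
under eq_bigr => c _.
  under eq_bigr do rewrite -mulrA -psiD.
  rewrite -mulr_sumr.
  under eq_bigr do rewrite eG2.
  rewrite sum_psi subr_eq0.
  over.
rewrite (bigD1 1) //= eqxx chi1 mul1r big1 ?addr0 // => c /negbTE ->.
by rewrite mulr0.
Qed.


Variable A : {set F}.
Hypothesis hA : (#|A| ^ 2)%N = #|F|.

Definition S c := \sum_(a in A) psi (a * c).

Lemma normS2 c : `|S c| ^+ 2 = \sum_(a in A) \sum_(b in A) psi ((a - b) * c).
Proof.
rewrite normCK /S rmorph_sum mulr_suml; apply: eq_bigr => a _.
rewrite mulr_sumr; apply: eq_bigr => b _.
by rewrite /= psiN -psiD mulrBl.
Qed.

Definition T := \sum_(a in A) \sum_(b in A) (chi (a - b))^*.

Lemma main_sum : \sum_c chi c * `|S c| ^+ 2 = G * T.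
Proof.
under eq_bigr do rewrite normS2 mulr_sumr.
rewrite exchange_big /= /T mulr_sumr; apply: eq_bigr => a _.
under eq_bigr do rewrite mulr_sumr.
rewrite exchange_big /= mulr_sumr; apply: eq_bigr => b _.
by rewrite G1 mulrC.
Qed.

Lemma pars : \sum_c `|S c| ^+ 2 = #|F|%:R * #|A|%:R.
Proof.
under eq_bigr do rewrite normS2.
rewrite exchange_big /=.
transitivity (\sum_(a in A) (#|F|%:R : C)); last by rewrite sumr_const mulr_natr.
apply: eq_bigr => a ha; rewrite exchange_big /=.
under eq_bigr do rewrite sum_psi subr_eq0.
rewrite (bigD1 a) //= eqxx big1 ?addr0 // => b /andP[_ hb].
by rewrite eq_sym (negbTE hb).
Qed.

Lemma S0 : S 0 = #|A|%:R.
Proof. by rewrite /S; under eq_bigr do rewrite mulr0 psi0; rewrite sumr_const. Qed.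

Definition N := (#|A| ^ 2 - #|A|)%N.

Lemma A_gt1 : (1 < #|A|)%N.
Proof.
have cardF : (1 < #|F|)%N by rewrite (cardD1 0) (cardD1 1) !inE oner_eq0.
rewrite ltnNge; apply/negP => h; move: cardF; rewrite -hA.
by case: #|A| h => [|[]].
Qed.

Lemma N_gt0 : (0 < N)%N.
Proof.
rewrite /N subn_gt0 -{1}[#|A|]muln1 expnS expn1 ltn_mul2l A_gt1 andbT.
by apply: ltn_trans A_gt1.
Qed.

Lemma NE : (N%:R : C) = #|A|%:R ^+ 2 - #|A|%:R.
Proof.
rewrite /N natrB ?natrX //.
by rewrite -{1}[#|A|]muln1 expnS expn1 leq_mul2l (ltnW A_gt1) orbT.
Qed.

Lemma normG : `|G| = #|A|%:R.
Proof.
apply/eqP; rewrite -(eqrXn2 (_ : (0 < 2)%N)) ?normr_ge0 ?ler0n //.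
by rewrite normCK G2 -natrX hA.
Qed.

Lemma G_neq0 : G != 0.
Proof. by rewrite -normr_eq0 normG pnatr_eq0 -lt0n; apply: ltn_trans A_gt1. Qed.

Lemma sum_norm_z : \sum_c `|chi c * `|S c| ^+ 2| = #|A|%:R * N%:R.
Proof.
have e : forall c, `|chi c * `|S c| ^+ 2| = (c != 0)%:R * `|S c| ^+ 2.
  move=> c; have [->|hc] := eqVneq c 0; first by rewrite chi0 !mul0r normr0.
  by rewrite /= mul1r normrM norm_chi // mul1r normrX normr_id.
under eq_bigr do rewrite e.
have P := pars; rewrite (bigD1 0) //= S0 normr_nat in P.
rewrite (bigD1 0) //= eqxx mul0r add0r.
have -> : \sum_(c | c != 0) (c != 0)%:R * `|S c| ^+ 2 = \sum_(c | c != 0) `|S c| ^+ 2.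
  by apply: eq_bigr => c ->; rewrite mul1r.
apply: (addrI (#|A|%:R ^+ 2)); rewrite P -hA natrX NE; ring.
Qed.

Lemma count_pairs : \sum_(a in A) \sum_(b in A) ((a != b)%:R : C) = N%:R.
Proof.
transitivity (\sum_(a in A) (#|A|%:R - 1 : C)).
  apply: eq_bigr => a ha.
  have e : forall b, ((a != b)%:R : C) = 1 - (a == b)%:R by move=> b; case: (a == b); rewrite ?subr0 ?subrr.
  under eq_bigr do rewrite e.
  rewrite sumrB sumr_const (bigD1 a) //= eqxx big1 ?addr0 // => b /andP[_ hb].
  by rewrite eq_sym (negbTE hb).
by rewrite sumr_const NE -mulr_natr; ring.
Qed.


Theorem abstract_main :
  (forall a b, a \in A -> b \in A -> a != b -> chi (a - b) = 1) <->
  (forall c, c != 0 -> same_arg (chi c * `|S c| ^+ 2) G).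
Proof.
have hn : (0 : C) < #|A|%:R by rewrite ltr0n; apply: ltn_trans A_gt1.
have hN : (0 : C) < N%:R by rewrite ltr0n N_gt0.
have hn0 : (#|A|%:R : C) != 0 by rewrite Order.POrderTheory.gt_eqF.
have hN0 : (N%:R : C) != 0 by rewrite Order.POrderTheory.gt_eqF.
split.
- move=> H.
  have hT : T = N%:R.
    rewrite -count_pairs /T; apply: eq_bigr => a ha; apply: eq_bigr => b hb.
    have [->|hab] := eqVneq a b; first by rewrite subrr chi0 conjC0.
    by rewrite H // conjC1.
  have hs : \sum_c chi c * `|S c| ^+ 2 = G * N%:R by rewrite main_sum hT.
  have heq : `|\sum_c chi c * `|S c| ^+ 2| = \sum_c `|chi c * `|S c| ^+ 2|.
    by rewrite hs sum_norm_z normrM normG ger0_norm // ltW.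
  have [t _ ht] := normC_sum_eq heq.
  have htG : G = #|A|%:R * t.
    have : \sum_c chi c * `|S c| ^+ 2 = (\sum_c `|chi c * `|S c| ^+ 2|) * t.
      by rewrite mulr_suml; apply: eq_bigr => c _; exact: ht.
    by rewrite hs sum_norm_z mulrAC => /(mulIf hN0).
  move=> c hc.
  have [z0|zn0] := eqVneq (chi c * `|S c| ^+ 2) 0; first by left.
  right; right.
  have hreal : `|chi c * `|S c| ^+ 2| / #|A|%:R \is Num.real.
    by apply: ger0_real; rewrite divr_ge0 // ltW.
  exists (complex.Re (`|chi c * `|S c| ^+ 2| / #|A|%:R)).
  split.
    by rewrite -ltcR RRe_real // divr_gt0 // normr_gt0.
  by rewrite RRe_real // htG [in RHS]mulrA divfK // -ht.
- move=> H.
  have hz : forall c, chi c * `|S c| ^+ 2 = `|chi c * `|S c| ^+ 2| / #|A|%:R * G.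
    move=> c; have [->|hc] := eqVneq c 0; first by rewrite chi0 !mul0r normr0 !mul0r.
    case: (H c hc) => [z0|[G0|[r [r0 ->]]]].
    + by rewrite z0 normr0 !mul0r.
    + by move: G_neq0; rewrite G0 eqxx.
    + have -> : `|r%:C%C * G| = r%:C%C * #|A|%:R by rewrite normrM normG ger0_norm // ler0c Order.POrderTheory.ltW.
      by rewrite mulfK.
  have hs : \sum_c chi c * `|S c| ^+ 2 = G * N%:R.
    rewrite (eq_bigr _ (fun c _ => hz c)) -mulr_suml -mulr_suml sum_norm_z.
    by rewrite [_ * N%:R / _]mulrAC mulfV // mul1r mulrC.
  have hT : T = N%:R by apply: (mulfI G_neq0); rewrite -main_sum hs.
  have hT' : `|T| = \sum_(p | (p.1 \in A) && (p.2 \in A)) `|(chi (p.1 - p.2))^*|.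
    rewrite hT ger0_norm ?ler0n // -count_pairs pair_big_dep.
    apply: eq_bigr => [[a b]] /andP[ha hb] /=.
    have [->|hab] := eqVneq a b; first by rewrite subrr chi0 conjC0 normr0.
    by rewrite norm_conjC norm_chi // subr_eq0.
  have hTp : T = \sum_(p | (p.1 \in A) && (p.2 \in A)) (chi (p.1 - p.2))^*.
    by rewrite /T pair_big_dep.
  have hT2 := hT'; rewrite hTp in hT2.
  have [t _ ht] := normC_sum_eq hT2.
  have t1 : t = 1.
    have := hT; rewrite hTp (eq_bigr _ ht) -mulr_suml -hT2 -hTp hT ger0_norm ?ler0n //.
    by rewrite -{2}[N%:R]mulr1 => /(mulfI hN0).
  move=> a b ha hb hab.
  have := ht (a, b); rewrite /= ha hb => /(_ isT).
  rewrite norm_conjC norm_chi ?subr_eq0 // mul1r t1 => h.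
  by rewrite -[chi _]conjCK h conjC1.
Qed.

End Abstract.


Section Trace.
Variables (F : finFieldType) (p k : nat).
Hypotheses (hp : prime p) (hchar : p \in [pchar F]) (hk : (0 < k)%N)
  (hq : #|F| = (p ^ (2 * k))%N).

Local Notation n := (logn p #|F|).
Local Notation Tr := (@abs_trace F p).

Lemma lognE : n = (2 * k)%N.
Proof. by rewrite hq pfactorK. Qed.

Lemma p_gt1 : (1 < p)%N. Proof. exact: prime_gt1. Qed.

Lemma frobX (x y : F) i : (x + y) ^+ (p ^ i) = x ^+ (p ^ i) + y ^+ (p ^ i).
Proof.
apply: exprDn_pchar; rewrite (eq_pnat _ (pcharf_eq hchar)) pnatX pnat_id //.
Qed.

Lemma trD x y : Tr (x + y) = Tr x + Tr y.
Proof. by rewrite /abs_trace -big_split; apply: eq_bigr => i _; rewrite frobX. Qed.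

Lemma trX x : Tr x ^+ p = Tr x.
Proof.
have -> : Tr x ^+ p = \sum_(i < n) x ^+ (p ^ i.+1).
  rewrite /abs_trace -(pFrobenius_autE hchar) rmorph_sum; apply: eq_bigr => i _.
  by rewrite /= pFrobenius_autE -exprM expnSr.
have e : \sum_(i < n.+1) x ^+ (p ^ i) = x ^+ (p ^ 0) + \sum_(i < n) x ^+ (p ^ (bump 0 i)).
  by rewrite big_ord_recl.
rewrite big_ord_recr /= in e.
have hx : x ^+ (p ^ n) = x ^+ (p ^ 0) by rewrite lognE expn0 expr1 -hq expf_card.
rewrite /abs_trace; apply: (addrI (x ^+ (p ^ 0))); rewrite -e hx addrC.
by [].
Qed.

Lemma natr_mod m : (m%:R : F) = (m %% p)%:R.
Proof. by rewrite {1}(divn_eq m p) natrD natrM (pcharf0 hchar) mulr0 add0r. Qed.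

Lemma natr_inj m m' : (m < p)%N -> (m' < p)%N -> (m%:R : F) = m'%:R -> m = m'.
Proof.
wlog le : m m' / (m <= m')%N.
  move=> W hm hm' e; case: (leqP m m') => h; first exact: W.
  by apply/esym/W => //; apply: ltnW.
move=> hm hm' e.
have : (p %| m' - m)%N by rewrite (dvdn_pcharf hchar) natrB // e subrr.
have [h0|] := eqVneq (m' - m)%N 0%N.
  by move=> _; apply/eqP; rewrite eqn_leq le /= -subn_eq0 h0.
rewrite -lt0n => h0 /(dvdn_leq h0); rewrite leqNgt.
by rewrite (leq_ltn_trans (leq_subr _ _) hm').
Qed.


Lemma frob_nat m : (m%:R : F) ^+ p = m%:R.
Proof. by rewrite -(pFrobenius_autE hchar) pFrobenius_aut_nat. Qed.

Lemma trace_in t : t ^+ p = t -> exists m : 'I_p, (m%:R : F) = t.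
Proof.
move=> ht; case: (pickP (fun m : 'I_p => (m%:R : F) == t)) => [m /eqP hm|hn].
  by exists m.
exfalso.
have sP : size ('X^p - 'X : {poly F}) = p.+1.
  by rewrite size_addl ?size_polyXn // size_opp size_polyX ltnS p_gt1.
have P0 : ('X^p - 'X : {poly F}) != 0 by rewrite -size_poly_eq0 sP.
suff : (size (t :: [seq (val m)%:R | m <- enum 'I_p]) < size ('X^p - 'X : {poly F})%R)%N.
  by rewrite sP /= size_map size_enum_ord ltnn.
apply: max_poly_roots P0 _ _.
  apply/andP; split; first by rewrite rootE !hornerE ht subrr.
  by apply/allP => y /mapP[m _ ->]; rewrite rootE !hornerE frob_nat subrr.
apply/andP; split.
  by apply/mapP => -[m _ hm]; move: (hn m); rewrite -hm eqxx.
change (uniq [seq ((val m)%:R : F) | m <- enum 'I_p]).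
rewrite map_inj_uniq ?enum_uniq // => m1 m2 e; apply: val_inj.
by apply: natr_inj => //; apply: ltn_ord.
Qed.

Lemma trace_intE x : ((trace_int p x)%:R : F) = Tr x /\ (trace_int p x < p)%N.
Proof.
rewrite /trace_int; case: pickP => [m /eqP hm | hn]; first by split; [exact: hm | exact: ltn_ord].
exfalso; have [m hm] := trace_in _ (trX x); by move: (hn m); rewrite hm eqxx.
Qed.

Lemma tr_nonzero : exists c, Tr c != 0.
Proof.
case: (pickP (fun c => Tr c != 0)) => [c hc|hn]; first by exists c.
exfalso.
pose P := \sum_(i < n) 'X^(p ^ i) : {poly F}.
have hP : forall x, P.[x] = Tr x.
  by move=> x; rewrite horner_sum; apply: eq_bigr => i _; rewrite hornerXn.
have hn0 : (0 < n)%N by rewrite lognE muln_gt0 hk.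
have e1 : forall j : 'I_n, j != Ordinal hn0 -> (1 == p ^ j)%N = false.
  move=> j hj; rewrite -[1%N](expn0 p) eqn_exp2l ?p_gt1 //; apply/negbTE.
  by move: hj; apply: contra => /eqP h; apply/eqP/val_inj.
have P0 : P != 0.
  apply/eqP => /(congr1 (fun q : {poly F} => q`_1)).
  rewrite coef_sum coef0 (bigD1 (Ordinal hn0)) //= coefXn expn0 eqxx big1 ?addr0.
    by move/eqP; rewrite oner_eq0.
  by move=> j hj; rewrite coefXn e1.
have sP : (size P <= (p ^ n.-1).+1)%N.
  apply: leq_trans (size_sum _ _ _) _; apply/bigmax_leqP => i _.
  by rewrite size_polyXn ltnS leq_exp2l ?p_gt1 // -ltnS prednK.
have h : ((p ^ n.-1).+1 <= #|F|)%N.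
  by rewrite {2}hq -lognE ltn_exp2l ?p_gt1 // prednK.
suff : (size (enum F) < size P)%N.
  by rewrite -cardE => /leq_trans /(_ (leq_trans sP h)); rewrite ltnn.
apply: max_poly_roots P0 _ (enum_uniq _).
by apply/allP => x _; rewrite rootE hP (negbFE (hn x)).
Qed.

End Trace.


Section Omega.
Variables (R : realType) (p : nat).
Hypotheses (hp : prime p) (hodd : odd p).

Definition e (m : nat) : R[i] :=
  Complex (cos (2 * pi * m%:R / p%:R)) (sin (2 * pi * m%:R / p%:R)).

Lemma expiD (u v : R) : Complex (cos (u + v)) (sin (u + v)) =
  Complex (cos u) (sin u) * Complex (cos v) (sin v).
Proof. by rewrite cosD sinD; apply/eqP; rewrite eq_complex /= eqxx addrC eqxx. Qed.

Lemma eE m : e m = e 1 ^+ m.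
Proof.
elim: m => [|m IH].
  by rewrite /e !mulr0 !mul0r cos0 sin0 expr0.
rewrite exprS -IH /e -expiD; congr Complex; congr (_ _);
  by rewrite -mulrDl -mulrDr -natrD add1n.
Qed.

Lemma p_neq0 : (p%:R : R) != 0.
Proof. by rewrite pnatr_eq0 -lt0n prime_gt0. Qed.

Lemma e_p : e p = 1.
Proof. by rewrite /e mulfK ?p_neq0 // mulr_natl cos2pi sin2pi. Qed.

Lemma p_gt2 : (2 < p)%N.
Proof.
have := prime_gt1 hp; rewrite leq_eqVlt => /orP[/eqP h|//].
by move: hodd; rewrite -h.
Qed.

Lemma e1_neq1 : e 1 != 1.
Proof.
apply/eqP => /(congr1 (@complex.Im R)) /=.
have hp3 : (3 : R) <= p%:R by rewrite (ler_nat R 3 p) p_gt2.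
have pi0 := pi_gt0 R.
suff : 0 < sin (2 * pi * 1%:R / p%:R :> R) by move=> h e0; move: h; rewrite e0 Order.POrderTheory.ltxx.
apply: sin_gt0_pi; apply/andP; split.
  by rewrite mulr1 divr_gt0 // ?mulr_gt0 // ltr0n prime_gt0.
rewrite mulr1 ltr_pdivrMr ?ltr0n ?prime_gt0 //; nra.
Qed.


Lemma norm_e m : `|e m| = 1.
Proof.
rewrite normc_def (_ : complex.Re (e m) = cos (2 * pi * m%:R / p%:R)) //.
by rewrite (_ : complex.Im (e m) = sin (2 * pi * m%:R / p%:R)) // cos2Dsin2 sqrtr1.
Qed.

Lemma e1p : e 1 ^+ p = 1.
Proof. by rewrite -eE e_p. Qed.

Lemma prim_e1 : p.-primitive_root (e 1).
Proof.
have [d hd hdp] := prim_order_exists (prime_gt0 hp) e1p.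
case/primeP: hp => _ /(_ d hdp) /orP[/eqP d1|/eqP dp]; last by rewrite -dp.
by move: (prim_expr_order hd); rewrite d1 expr1 => /eqP; rewrite (negbTE e1_neq1).
Qed.

Lemma e_neq1 m : (0 < m)%N -> (m < p)%N -> e m != 1.
Proof.
move=> h0 hm; rewrite eE; apply/eqP => h.
have := eq_prim_root_expr prim_e1 m 0; rewrite expr0 h eqxx mod0n modn_small //.
by move/esym/eqP => h1; move: h0; rewrite h1.
Qed.

Lemma e_mod m : e m = e (m %% p).
Proof. by rewrite [LHS]eE [RHS]eE expr_mod // e1p. Qed.

End Omega.

Theorem proposition3p2 (R : realType) (F : finFieldType) (p k : nat)
  (hp : prime p) (hodd : odd p) (hchar : p \in [pchar F])
  (hk : (0 < k)%N) (hq : #|F| = (p ^ (2 * k))%N)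
  (chi : F -> R[i]) (hchi : mult_char chi) (hnt : nontrivial_char chi)
  (A : {set F}) (hA : (#|A| ^ 2)%N = #|F|) :
  (forall a b, a \in A -> b \in A -> a != b -> chi (a - b) = 1) <->
  (forall c : F, c != 0 ->
     same_arg (chi c * `|S_sum R p A c| ^+ 2) (gauss_sum p chi)).
Proof.
pose psi := ep_tr R p : F -> R[i].
have psiE : forall x, psi x = e R p (trace_int p x) by [].
have ti := trace_intE _ _ _ hp hchar hq.
have p0 : (0 < p)%N := prime_gt0 hp.
have eM : forall a b, e R p (a + b) = e R p a * e R p b.
  by move=> a b; rewrite eE exprD -!eE.
have psiD : forall x y, psi (x + y) = psi x * psi y.
  move=> x y; rewrite !psiE -eM.
  have hm : ((trace_int p (x + y)%R) %% p = (trace_int p x + trace_int p y) %% p)%N.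
    apply: (natr_inj _ _ hchar); rewrite ?ltn_pmod //.
    rewrite -!(natr_mod _ _ hchar) natrD (proj1 (ti x)) (proj1 (ti y)) (proj1 (ti (x + y))).
    exact: (trD _ _ hp hchar).
  by rewrite e_mod // hm -e_mod.
have npsi : forall x, `|psi x| = 1 by move=> x; rewrite psiE norm_e.
have psi0 : psi 0 = 1.
  have h := psiD 0 0; rewrite addr0 in h.
  have h0 : psi 0 != 0 by rewrite -normr_eq0 npsi oner_eq0.
  by apply: (mulfI h0); rewrite -h mulr1.
have psiN : forall x, (psi x)^* = psi (- x).
  move=> x; rewrite -[_^*]mulr1 -psi0 -(subrr x) psiD mulrA (mulrC _ (psi x)).
  by rewrite -normCK npsi expr1n mul1r.
have [c0 hc0] := tr_nonzero _ _ _ hp hk hq.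
have psic0 : psi c0 != 1.
  rewrite psiE; have [h1 h2] := ti c0; apply: e_neq1 => //.
  by rewrite lt0n; apply: contraNneq hc0 => h; rewrite -h1 h.
case: hchi => chi0 chi1 chiM0.
case: hnt => x1 [x1n0 chix1].
exact: (abstract_main _ _ _ psiD psi0 psiN _ psic0 _ chi0 chi1 chiM0 _ x1n0 chix1 _ hA).
Qed.
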